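(* (1) For $n\geq 1$, a $2$-null CRC in $G_n$ with covering radius $\rho\geq 2$, $c_1=1$ and $c_2=3$ exists if and only if $n=2$; in that case its parameter matrix is $[0,4|1,0,3|3,0,1|4,0]$ (realized by the set of even-weight words of a perfect code in $G_2$). (2) For no $n\geq 1$ is there a $2$-null CRC in $G_n$ with covering radius $\rho\geq 2$, $c_1=2$ and $c_2=3$.
   Context: $G_n$: vertex set $\mathbb{Z}^n$, $x\sim y$ iff $\sum_i|x_i-y_i|=1$; weight of $x$ is $\sum_i|x_i|$. For a code $C$ with covering radius $\rho=\max_v d(v,C)$, $C_i=\{v:d(v,C)=i\}$. $C$ is a CRC if for all $i,j$ every vertex of $C_i$ has the same number $\alpha_{ij}$ of neighbours in $C_j$, with $\alpha_{ij}=0$ for $|i-j|>1$; $a_i=\alpha_{ii}$, $b_i=\alpha_{i,i+1}$, $c_i=\alpha_{i,i-1}$, parameter matrix written $[a_0,b_0|c_1,a_1,b_1|\ldots|c_\rho,a_\rho]$. $C$ is $r$-null if $a_0=\cdots=a_{r-1}=0$. A perfect code in $G_n$ is a vertex set meeting every closed ball of radius one in exactly one vertex. *)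

(* Defs.v *)
From mathcomp Require Import all_boot all_order all_algebra.
Set Implicit Arguments. Unset Strict Implicit. Unset Printing Implicit Defensive.
Import Order.TTheory GRing.Theory Num.Theory.

Definition V (n : nat) := {ffun 'I_n -> int}.

Definition adj (n : nat) (x y : V n) : Prop :=
  (\sum_(i < n) `|x i - y i|)%N = 1%N.

Definition weight (n : nat) (x : V n) : nat := (\sum_(i < n) `|x i|)%N.

Inductive walk (n : nat) : V n -> V n -> nat -> Prop :=
| walk0 (x : V n) : walk x x 0
| walkS (x y z : V n) (k : nat) : adj x y -> walk y z k -> walk x z k.+1.

Definition distC (n : nat) (C : V n -> Prop) (v : V n) (i : nat) : Prop :=
  (exists c, C c /\ walk v c i) /\
  (forall c j, C c -> walk v c j -> (i <= j)%N).

Definition covering_radius (n : nat) (C : V n -> Prop) (rho : nat) : Prop :=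
  (forall v, exists i, (i <= rho)%N /\ distC C v i) /\
  (exists v, distC C v rho).

Definition nb_count (n : nat) (C : V n -> Prop) (v : V n) (j k : nat) : Prop :=
  exists s : seq (V n), uniq s /\
    (forall y, y \in s <-> (adj v y /\ distC C y j)) /\ size s = k.

Definition is_CRC (n : nat) (C : V n -> Prop) (rho : nat)
    (alpha : nat -> nat -> nat) : Prop :=
  covering_radius C rho /\
  (forall i j, (i <= rho)%N -> (j <= rho)%N ->
     forall v, distC C v i -> nb_count C v j (alpha i j)) /\
  (forall i j, (i <= rho)%N -> (j <= rho)%N ->
     (j.+1 < i)%N \/ (i.+1 < j)%N -> alpha i j = 0%N).

(* r-null: a_0 = ... = a_{r-1} = 0 *)
Definition r_null (r : nat) (alpha : nat -> nat -> nat) : Prop :=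
  forall i, (i < r)%N -> alpha i i = 0%N.

Definition perfect_code (n : nat) (P : V n -> Prop) : Prop :=
  forall v : V n, exists! x, P x /\ (x = v \/ adj v x).

Definition params_0413 (rho : nat) (alpha : nat -> nat -> nat) : Prop :=
  rho = 3%N /\
  alpha 0 0 = 0%N /\ alpha 0 1 = 4%N /\
  alpha 1 0 = 1%N /\ alpha 1 1 = 0%N /\ alpha 1 2 = 3%N /\
  alpha 2 1 = 3%N /\ alpha 2 2 = 0%N /\ alpha 2 3 = 1%N /\
  alpha 3 2 = 4%N /\ alpha 3 3 = 0%N.

(* Main.v *)
Require Import Defs.
From mathcomp Require Import all_boot all_order all_algebra zify.
From Stdlib Require Import Classical.
Set Implicit Arguments. Unset Strict Implicit. Unset Printing Implicit Defensive.
Import Order.TTheory GRing.Theory Num.Theory.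
Local Open Scope ring_scope.

Lemma fD n (u v : V n) k : (u + v) k = (u k + v k)%R :> int.
Proof. by rewrite ffunE. Qed.
Lemma fN n (u : V n) k : (- u) k = (- u k)%R :> int.
Proof. by rewrite ffunE. Qed.
Lemma vext n (u v : V n) : (forall k, u k = v k :> int) -> u = v.
Proof. by move=> H; apply/ffunP => k; exact: H k. Qed.
Lemma vextP n (u v : V n) : u = v -> forall k, u k = v k :> int.
Proof. by move=> ->. Qed.
Ltac fsimp := rewrite ?fD ?fN.
Ltac dsolve1 := first [ done | rewrite eq_sym; done ].
Ltac dsolve2 := first [ dsolve1 | rewrite eqr_opp; dsolve1 | rewrite eqr_oppLR; dsolve1
  | rewrite -eqr_oppLR; dsolve1 | rewrite eq_sym eqr_oppLR; dsolve1
  | rewrite eq_sym -eqr_oppLR; dsolve1 | rewrite opprK; dsolve1 | rewrite eqr_oppLR opprK; dsolve1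
  | rewrite eq_sym eqr_oppLR opprK; dsolve1 ].
Ltac dsolve := repeat (apply/andP; split); dsolve2.
Ltac vid := let k := fresh "k" in apply: vext => k; fsimp; clear - k; lia.

Lemma distE (a b : int) : (`|a - b|)%N = absz (a - b)%R.
Proof. by []. Qed.

Section Basic.
Variable n : nat.
Implicit Types x y z : V n.

Definition e (i : 'I_n) (s : bool) : V n :=
  [ffun k => if k == i then (if s then 1%Z else (-1)%Z) else 0%Z].
Definition unitv (d : V n) := exists i s, d = e i s.
Lemma fe i s k : e i s k = if k == i then (if s then 1%Z else (-1)%Z) else 0%Z.
Proof. by rewrite ffunE. Qed.

Lemma adj_sym x y : adj x y -> adj y x.
Proof. rewrite /adj => <-; apply: eq_bigr => i _; by rewrite -abszN opprB. Qed.

Lemma adj_e x i s : adj x (x + e i s).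
Proof.
rewrite /adj (bigD1 i) //= big1 => [|k Hk]; rewrite !distE fD fe.
  rewrite eqxx; case: s; lia.
by rewrite (negbTE Hk); lia.
Qed.

Lemma adj_unit x d : unitv d -> adj x (x + d).
Proof. by case=> i [s ->]; apply: adj_e. Qed.

Lemma adjP x y : adj x y -> exists i s, y = x + e i s.
Proof.
rewrite /adj => H.
move: H; under eq_bigr do rewrite distE; move=> H.
have [i Hi] : exists i, (absz (x i - y i)%R != 0)%N.
  case: (pickP (fun i => (absz (x i - y i)%R != 0)%N)) => [i Hi|H0]; first by exists i.
  move: H; rewrite big1 // => i _; by move: (H0 i) => /negbFE/eqP.
move: H; rewrite (bigD1 i) //= => H.
move: H; set S := (\sum_(_ < _ | _) _)%N => H.
have : S = 0%N by lia.
rewrite /S => /eqP; rewrite sum_nat_eq0 => /forallP H0.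
exists i, (x i < y i).
apply: vext => k; rewrite fD fe.
case: (eqVneq k i) => [->|Hk].
  have : absz (x i - y i)%R = 1%N by lia.
  case: ifP; lia.
move: (H0 k); rewrite Hk /= => /eqP h; lia.
Qed.

Lemma unitN d : unitv d -> unitv (- d).
Proof.
case=> i [s ->]; exists i, (~~ s); apply: vext => k; rewrite fN !fe.
case: (k == i); case: s => /=; lia.
Qed.

Lemma unit_neqN d : unitv d -> d != - d.
Proof.
case=> i [s ->]; apply/eqP => /vextP /(_ i); rewrite ?fN !fe eqxx; case: s; lia.
Qed.

Lemma e_inj i j s t : e i s = e j t -> i = j /\ s = t.
Proof.
move=> /vextP /(_ i); rewrite !fe eqxx.
case: (eqVneq i j) => [<-|]; last by case: s; lia.
by case: s; case: t => //=; lia.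
Qed.

Lemma e_neqN i j s t : i != j -> e i s != - e j t.
Proof.
move=> Hij; apply/eqP => /vextP /(_ i); rewrite ?fN !fe eqxx (negbTE Hij); case: s; lia.
Qed.

Lemma e_neq i j s t : i != j -> e i s != e j t.
Proof.
move=> Hij; apply/eqP => /vextP /(_ i); rewrite ?fN !fe eqxx (negbTE Hij); case: s; lia.
Qed.

End Basic.

Section CRC.
Variable n : nat.
Variable C : V n -> Prop.
Variable rho : nat.
Variable alpha : nat -> nat -> nat.
Hypothesis HC : is_CRC C rho alpha.

Local Notation D := (distC C).
Implicit Types u v w x y z p q : V n.

Lemma D_uniq v i j : D v i -> D v j -> i = j.
Proof.
move=> [[c [Cc Hc]] Hi] [[c' [Cc' Hc']] Hj].
by apply/eqP; rewrite eqn_leq (Hi _ _ Cc' Hc') (Hj _ _ Cc Hc).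
Qed.

Lemma D_ex v : exists i, (i <= rho)%N /\ D v i.
Proof. by case: HC => [[H _] _]; apply: H. Qed.

Lemma D0 v : D v 0 <-> C v.
Proof.
split.
  move=> [[c [Cc W]] _]; inversion W; by subst.
move=> Cv; split; first by exists v; split => //; constructor.
by move=> *.
Qed.

Lemma D_adj u v i j : adj u v -> D u i -> D v j -> (j <= i.+1)%N.
Proof.
move=> Huv [[c [Cc W]] _] [_ Hj].
apply: (Hj c) => //; apply: walkS W; exact: adj_sym.
Qed.

Lemma D_down v k : D v k.+1 -> exists u, adj v u /\ D u k.
Proof.
move=> [[c [Cc W]] Hmin]; inversion W as [|x0 y0 z0 k0 Hxy Wy]; subst.
exists y0; split => //; split; first by exists c.
move=> c' j Cc' W'; have := Hmin c' j.+1 Cc' (walkS Hxy W'); done.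
Qed.

Lemma D_downn v k m : D v k -> (m <= k)%N -> exists u, D u m.
Proof.
elim: k v => [|k IH] v Hv Hm.
  by exists v; have -> : m = 0%N by lia.
case: (ltnP m k.+1) => Hmk.
  by case: (D_down Hv) => u [_ Hu]; apply: (IH u).
by exists v; have -> : m = k.+1 by lia.
Qed.

Lemma D_nb v i j : D v i -> (i <= rho)%N -> (j <= rho)%N -> nb_count C v j (alpha i j).
Proof. by case: HC => _ [H _] Dv Hi Hj; apply: H. Qed.

Lemma nb_le v j k (t : seq (V n)) : nb_count C v j k -> uniq t ->
  (forall y, y \in t -> adj v y /\ D y j) -> (size t <= k)%N.
Proof.
move=> [s [Us [Hs <-]]] Ut Ht; apply: uniq_leq_size => // y /Ht /Hs //.
Qed.

Lemma nb_out v j k (t : seq (V n)) : nb_count C v j k -> (size t < k)%N ->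
  exists y, [/\ adj v y, D y j & y \notin t].
Proof.
move=> [s [Us [Hs Hsz]]] Ht.
case: (boolP (all (fun y => y \in t) s)) => [/allP Hall|].
  have : (size s <= size t)%N by apply: uniq_leq_size => // y /Hall.
  lia.
rewrite -has_predC => /hasP [y ys /= yt]; exists y.
by case: (Hs y) => /(_ ys) [? ?] _; split.
Qed.

Lemma D_exists v : exists i, D v i.
Proof. by case: (D_ex v) => i [_ H]; exists i. Qed.

Lemma C_ex : exists c, C c.
Proof. by case: (D_exists 0) => i [[c [Cc _]] _]; exists c. Qed.

Lemma D_le_rho v i : D v i -> (i <= rho)%N.
Proof. by move=> Hv; case: (D_ex v) => j [Hj Dj]; rewrite (D_uniq Hv Dj). Qed.

Hypothesis Hnull : r_null 2 alpha.
Hypothesis Hrho : (2 <= rho)%N.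

Lemma noCC p q : C p -> adj p q -> ~ C q.
Proof.
move=> Cp Hpq Cq.
have Hn := D_nb (proj2 (D0 p) Cp) (leq0n _) (leq0n _).
have H1 : (size [:: q] <= alpha 0 0)%N.
  by apply: (nb_le Hn) => // y; rewrite inE => /eqP ->; split => //; apply/D0.
by rewrite Hnull in H1.
Qed.

Lemma nbC p q : C p -> adj p q -> D q 1.
Proof.
move=> Cp Hpq; case: (D_exists q) => j Hj.
have := D_adj Hpq (proj2 (D0 p) Cp) Hj.
case: j Hj => [|[|j]] Hj // _.
by move/D0: Hj; move/(noCC Cp Hpq).
Qed.

Lemma nbC' p q : C p -> adj q p -> D q 1.
Proof. by move=> Cp /adj_sym; apply: nbC. Qed.

Lemma no11 u v : D u 1 -> adj u v -> ~ D v 1.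
Proof.
move=> Du Huv Dv.
have Hn := D_nb Du (ltnW Hrho) (ltnW Hrho).
have H1 : (size [:: v] <= alpha 1 1)%N.
  by apply: (nb_le Hn) => // y; rewrite inE => /eqP ->; split.
by rewrite Hnull in H1.
Qed.

Lemma Cnb_le u (t : seq (V n)) : D u 1 -> uniq t ->
  (forall y, y \in t -> adj u y /\ C y) -> (size t <= alpha 1 0)%N.
Proof.
move=> Du Ut Ht; apply: (nb_le (D_nb Du (ltnW Hrho) (leq0n _))) => // y /Ht [? ?].
by split => //; apply/D0.
Qed.

Lemma D1_nb2 w (t : seq (V n)) : D w 2 -> uniq t ->
  (forall y, y \in t -> adj w y /\ D y 1) -> (size t <= alpha 2 1)%N.
Proof.
move=> Dw Ut Ht; exact: (nb_le (D_nb Dw Hrho (ltnW Hrho))).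
Qed.


Lemma four_bad (Hc2 : alpha 2 1 = 3%N) w d1 d2 d3 d4 : D w 2 ->
  unitv d1 -> unitv d2 -> unitv d3 -> unitv d4 ->
  [&& d1 != d2, d1 != d3, d1 != d4, d2 != d3, d2 != d4 & d3 != d4] ->
  D (w + d1) 1 -> D (w + d2) 1 -> D (w + d3) 1 -> D (w + d4) 1 -> False.
Proof.
move=> Dw U1 U2 U3 U4 Hd D1 D2 D3 D4.
have : (size [:: (w + d1)%R; (w + d2)%R; (w + d3)%R; (w + d4)%R] <= alpha 2 1)%N.
  apply: (D1_nb2 Dw) => //.
    move: Hd => /and3P [H12 H13 /and4P [H14 H23 H24 H34]].
    by rewrite /= !inE !(inj_eq (addrI w)) !negb_or H12 H13 H14 H23 H24 H34.
  by move=> y; rewrite !inE => /or4P [] /eqP ->; split => //; apply: adj_unit.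
by rewrite Hc2.
Qed.

Lemma three_C_bad (Hc1 : alpha 1 0 = 2%N) u d1 d2 d3 : D u 1 ->
  unitv d1 -> unitv d2 -> unitv d3 -> [&& d1 != d2, d1 != d3 & d2 != d3] ->
  C (u + d1) -> C (u + d2) -> C (u + d3) -> False.
Proof.
move=> Du U1 U2 U3 /and3P [H12 H13 H23] C1 C2 C3.
have : (size [:: (u + d1)%R; (u + d2)%R; (u + d3)%R] <= alpha 1 0)%N.
  apply: (Cnb_le Du) => //.
    by rewrite /= !inE !(inj_eq (addrI u)) !negb_or H12 H13 H23.
  by move=> y; rewrite !inE => /or3P [] /eqP ->; split => //; apply: adj_unit.
by rewrite Hc1.
Qed.

Lemma two_C_bad (Hc1 : alpha 1 0 = 1%N) u d1 d2 : D u 1 ->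
  unitv d1 -> unitv d2 -> d1 != d2 -> C (u + d1) -> C (u + d2) -> False.
Proof.
move=> Du U1 U2 H12 C1 C2.
have : (size [:: (u + d1)%R; (u + d2)%R] <= alpha 1 0)%N.
  apply: (Cnb_le Du) => //.
    by rewrite /= !inE !(inj_eq (addrI u)) H12.
  by move=> y; rewrite !inE => /orP [] /eqP ->; split => //; apply: adj_unit.
by rewrite Hc1.
Qed.

Lemma two_C_bad' (Hc1 : alpha 1 0 = 1%N) u p q : D u 1 ->
  p != q -> adj u p -> adj u q -> C p -> C q -> False.
Proof.
move=> Du Hpq Hp Hq Cp Cq.
have : (size [:: p; q] <= alpha 1 0)%N.
  apply: (Cnb_le Du) => //; first by rewrite /= ?inE ?orbF Hpq.
  by move=> y; rewrite !inE => /orP [] /eqP ->.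
by rewrite Hc1.
Qed.

Lemma adj_of x d : unitv d -> x = x + d - d.
Proof. by move=> _; rewrite addrK. Qed.

Lemma complete (Hc2 : alpha 2 1 = 3%N) w x1 x2 x3 : D w 2 ->
  unitv x1 -> unitv x2 -> unitv x3 -> [&& x1 != x2, x1 != x3 & x2 != x3] ->
  D (w + x1) 1 -> D (w + x2) 1 -> D (w + x3) 1 ->
  forall z, unitv z -> D (w + z) 1 -> [\/ z = x1, z = x2 | z = x3].
Proof.
move=> Dw U1 U2 U3 /and3P [H12 H13 H23] D1 D2 D3 z Uz Dz.
case: (eqVneq z x1) => [->|N1]; first by constructor.
case: (eqVneq z x2) => [->|N2]; first by constructor.
case: (eqVneq z x3) => [->|N3]; first by constructor.
exfalso; apply: (four_bad Hc2 Dw U1 U2 U3 Uz _ D1 D2 D3 Dz).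
by rewrite H12 H13 H23 !(eq_sym _ z) N1 N2 N3.
Qed.

Lemma Cnb w (P : V n -> Prop) y q : D w 2 ->
  (forall z, unitv z -> D (w + z) 1 -> P z) -> unitv y -> C q -> adj (w + y) q ->
  exists z, [/\ P z, unitv z, z != - y & q = w + y + z].
Proof.
move=> Dw Hc Uy Cq /adjP [i [s Hq]].
have Uz : unitv (e i s) by exists i, s.
exists (e i s); split => //.
  apply: Hc => //; apply: (nbC Cq); rewrite Hq.
  have -> : w + e i s = w + y + e i s + (- y) by vid.
  by apply: adj_unit; apply: unitN.
apply/eqP => Ez; move: Cq; rewrite Hq Ez addrK => /D0 Dw0.
by have := D_uniq Dw Dw0.
Qed.

Lemma two_of_two (Hc1 : alpha 1 0 = 2%N) u p1 p2 : D u 1 ->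
  (forall q, C q -> adj u q -> q = p1 \/ q = p2) -> C p1 /\ C p2.
Proof.
move=> Du H.
have Hn := D_nb Du (ltnW Hrho) (leq0n _); rewrite Hc1 in Hn.
case: (nb_out (t := [::]) Hn erefl) => y1 [A1 /D0 C1 _].
case: (nb_out (t := [:: y1]) Hn erefl) => y2 [A2 /D0 C2].
rewrite inE => N12.
case: (H _ C1 A1) => E1; case: (H _ C2 A2) => E2; subst => //.
  by rewrite eqxx in N12.
by rewrite eqxx in N12.
Qed.

Section Part2.
Hypothesis Hc1 : alpha 1 0 = 2%N.
Hypothesis Hc2 : alpha 2 1 = 3%N.

Lemma part2_B w a b : D w 2 -> unitv a -> unitv b -> b != a -> b != - a ->
  D (w + a) 1 -> D (w - a) 1 -> D (w + b) 1 ->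
  (forall z, unitv z -> D (w + z) 1 -> [\/ z = a, z = - a | z = b]) -> False.
Proof.
move=> Dw Ua Ub Nba Nbma Da Dma Db Hcomp.
have Uma := unitN Ua; have Umb := unitN Ub.
have Naa : a != - a by apply: unit_neqN.
have Nbb : b != - b by apply: unit_neqN.
have [Caa Cab] : C (w + a + a) /\ C (w + a + b).
  apply: (two_of_two Hc1 Da) => q Cq Hq.
  case: (Cnb Dw Hcomp Ua Cq Hq) => z [[]-> Uz Nz ->]; first by left.
    by rewrite eqxx in Nz.
  by right.
have [Cmama Cmab] : C (w - a - a) /\ C (w - a + b).
  apply: (two_of_two Hc1 Dma) => q Cq Hq.
  case: (Cnb Dw Hcomp Uma Cq Hq) => z [[]-> Uz Nz ->].
      by rewrite opprK eqxx in Nz.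
    by left.
  by right.
pose w' : V n := w + b + b.
have Dw' : D w' 2.
  case: (D_exists w') => j Dj.
  have Hadj : adj (w + b) w' by apply: adj_unit.
  have := D_adj Hadj Db Dj.
  case: j Dj => [|[|[|j]]] Dj // _.
    move/D0: Dj => Cw'; exfalso.
    have C1 : C (w + b + a) by have -> : w + b + a = w + a + b by vid.
    have C2 : C (w + b + - a) by have -> : w + b + - a = w - a + b by vid.
    have Hd : [&& a != - a, a != b & - a != b] by rewrite Naa eq_sym Nba eq_sym Nbma.
    exact: (three_C_bad Hc1 Db Ua Uma Ub Hd C1 C2 Cw').
  by case: (no11 Db Hadj).
have D'1 : D (w' + - b) 1 by have -> : w' + - b = w + b by rewrite /w' addrK.
have D'2 : D (w' + a) 1.
  apply: (nbC Cab); have -> : w' + a = w + a + b + b by rewrite /w'; vid.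
  exact: adj_unit.
have D'3 : D (w' + - a) 1.
  apply: (nbC Cmab); have -> : w' + - a = w - a + b + b by rewrite /w'; vid.
  exact: adj_unit.
have Hcomp' := complete Hc2 Dw' Umb Ua Uma ltac:(dsolve) D'1 D'2 D'3.
have [_ Cw'aa] : C (w' + a + (- b)) /\ C (w' + a + a).
  apply: (two_of_two Hc1 D'2) => q Cq Hq.
  case: (Cnb Dw' Hcomp' Ua Cq Hq) => z [[]-> Uz Nz ->].
      by left.
    by right.
  by rewrite eqxx in Nz.
pose m : V n := w + a + a + b.
have Dm : D m 1 by apply: (nbC Caa); exact: adj_unit.
apply: (three_C_bad Hc1 Dm Umb Uma Ub ltac:(dsolve) _ _ _).
- by have -> : m + - b = w + a + a by rewrite /m addrK.
- by have -> : m + - a = w + a + b by rewrite /m; vid.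
- by have -> : m + b = w' + a + a by rewrite /m /w'; vid.
Qed.


Lemma part2_A_core w a b g : D w 2 -> unitv a -> unitv b -> unitv g ->
  b != a -> b != - a -> g != a -> g != - a -> g != b -> g != - b ->
  D (w + a) 1 -> D (w + b) 1 -> D (w + g) 1 ->
  (forall z, unitv z -> D (w + z) 1 -> [\/ z = a, z = b | z = g]) ->
  ~ C (w + b + g) -> False.
Proof.
move=> Dw Ua Ub Ug Nba Nbma Nga Ngma Ngb Ngmb Da Db Dg Hcomp NCbg.
have Uma := unitN Ua; have Umb := unitN Ub; have Umg := unitN Ug.
have Naa : a != - a by apply: unit_neqN.
have Nbb : b != - b by apply: unit_neqN.
have Ngg : g != - g by apply: unit_neqN.
have [Cba Cbb] : C (w + b + a) /\ C (w + b + b).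
  apply: (two_of_two Hc1 Db) => q Cq Hq.
  case: (Cnb Dw Hcomp Ub Cq Hq) => z [[]-> Uz Nz Eq]; subst q.
  - by left.
  - by right.
  - by case: NCbg.
have [Cga Cgg] : C (w + g + a) /\ C (w + g + g).
  apply: (two_of_two Hc1 Dg) => q Cq Hq.
  case: (Cnb Dw Hcomp Ug Cq Hq) => z [[]-> Uz Nz Eq]; subst q.
  - by left.
  - by case: NCbg; have -> : w + b + g = w + g + b by vid.
  - by right.
pose v : V n := w + b + g.
have Dv : D v 2.
  case: (D_exists v) => j Dj.
  have Hadj : adj (w + b) v by apply: adj_unit.
  have := D_adj Hadj Db Dj.
  case: j Dj => [|[|[|j]]] Dj // _.
    by move/D0: Dj => Cv; case: NCbg.
  by case: (no11 Db Hadj).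
apply: (four_bad Hc2 Dv Umg Umb Ub Ug ltac:(dsolve)).
- by have -> : v + - g = w + b by rewrite /v addrK.
- by have -> : v + - b = w + g by rewrite /v; vid.
- apply: (nbC Cbb); have -> : v + b = w + b + b + g by rewrite /v; vid.
  exact: adj_unit.
- apply: (nbC Cgg); have -> : v + g = w + g + g + b by rewrite /v; vid.
  exact: adj_unit.
Qed.

Lemma part2_A w a b g : D w 2 -> unitv a -> unitv b -> unitv g ->
  b != a -> b != - a -> g != a -> g != - a -> g != b -> g != - b ->
  D (w + a) 1 -> D (w + b) 1 -> D (w + g) 1 ->
  (forall z, unitv z -> D (w + z) 1 -> [\/ z = a, z = b | z = g]) -> False.
Proof.
move=> Dw Ua Ub Ug Nba Nbma Nga Ngma Ngb Ngmb Da Db Dg Hcomp.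
have Uma := unitN Ua; have Umb := unitN Ub; have Umg := unitN Ug.
have Naa : a != - a by apply: unit_neqN.
have Nbb : b != - b by apply: unit_neqN.
have Ngg : g != - g by apply: unit_neqN.
case: (classic (C (w + b + g))) => Cbg; last first.
  exact: (part2_A_core Dw Ua Ub Ug Nba Nbma Nga Ngma Ngb Ngmb Da Db Dg Hcomp Cbg).
case: (classic (C (w + a + g))) => Cag; last first.
  apply: (part2_A_core Dw Ub Ua Ug ltac:(dsolve) ltac:(dsolve) ltac:(dsolve)
           ltac:(dsolve) ltac:(dsolve) ltac:(dsolve) Db Da Dg _ Cag).
  by move=> z Uz Dz; case: (Hcomp z Uz Dz) => ->; constructor.
case: (classic (C (w + a + b))) => Cab; last first.
  apply: (part2_A_core Dw Ug Ua Ub ltac:(dsolve) ltac:(dsolve) ltac:(dsolve)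
           ltac:(dsolve) ltac:(dsolve) ltac:(dsolve) Dg Da Db _ Cab).
  by move=> z Uz Dz; case: (Hcomp z Uz Dz) => ->; constructor.
pose m : V n := w + a + b + g.
have Dm : D m 1 by apply: (nbC Cab); exact: adj_unit.
apply: (three_C_bad Hc1 Dm Umg Umb Uma ltac:(dsolve)).
- by have -> : m + - g = w + a + b by rewrite /m addrK.
- by have -> : m + - b = w + a + g by rewrite /m; vid.
- by have -> : m + - a = w + b + g by rewrite /m; vid.
Qed.

Lemma part2_w w x1 x2 x3 : D w 2 -> unitv x1 -> unitv x2 -> unitv x3 ->
  [&& x1 != x2, x1 != x3 & x2 != x3] ->
  D (w + x1) 1 -> D (w + x2) 1 -> D (w + x3) 1 -> False.
Proof.
move=> Dw U1 U2 U3 Hd D1 D2 D3.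
have Hcomp := complete Hc2 Dw U1 U2 U3 Hd D1 D2 D3.
move: Hd => /and3P [N12 N13 N23].
case: (eqVneq x2 (- x1)) => E2.
  subst x2; apply: (part2_B Dw U1 U3 ltac:(dsolve) ltac:(dsolve) D1 D2 D3).
  by move=> z Uz Dz; case: (Hcomp z Uz Dz) => ->; constructor.
case: (eqVneq x3 (- x1)) => E3.
  subst x3; apply: (part2_B Dw U1 U2 ltac:(dsolve) ltac:(dsolve) D1 D3 D2).
  by move=> z Uz Dz; case: (Hcomp z Uz Dz) => ->; constructor.
case: (eqVneq x3 (- x2)) => E32.
  subst x3; apply: (part2_B Dw U2 U1 ltac:(dsolve) ltac:(dsolve) D2 D3 D1).
  by move=> z Uz Dz; case: (Hcomp z Uz Dz) => ->; constructor.
apply: (part2_A Dw U1 U2 U3 ltac:(dsolve) ltac:(dsolve) ltac:(dsolve)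
         ltac:(dsolve) ltac:(dsolve) ltac:(dsolve) D1 D2 D3).
by move=> z Uz Dz; case: (Hcomp z Uz Dz) => ->; constructor.
Qed.

End Part2.

Lemma D2_three (Hc2 : alpha 2 1 = 3%N) w : D w 2 ->
  exists x1 x2 x3, [/\ unitv x1, unitv x2, unitv x3,
    [&& x1 != x2, x1 != x3 & x2 != x3] &
    [/\ D (w + x1) 1, D (w + x2) 1 & D (w + x3) 1]].
Proof.
move=> Dw.
have Hn := D_nb Dw Hrho (ltnW Hrho); rewrite Hc2 in Hn.
case: (nb_out (t := [::]) Hn erefl) => y1 [A1 D1 _].
case: (nb_out (t := [:: y1]) Hn erefl) => y2 [A2 D2]; rewrite inE => N21.
case: (nb_out (t := [:: y1; y2]) Hn erefl) => y3 [A3 D3]; rewrite !inE negb_or => /andP [N31 N32].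
case: (adjP A1) => i1 [s1 E1]; case: (adjP A2) => i2 [s2 E2]; case: (adjP A3) => i3 [s3 E3].
exists (e i1 s1), (e i2 s2), (e i3 s3); split.
- by exists i1, s1.
- by exists i2, s2.
- by exists i3, s3.
- subst; rewrite !(inj_eq (addrI w)) in N21 N31 N32.
  by rewrite eq_sym N21 eq_sym N31 eq_sym N32.
- by subst.
Qed.

Lemma D_two_exists : exists w, D w 2.
Proof.
case: HC => [[_ [v Hv]] _].
exact: (D_downn Hv Hrho).
Qed.

Section Part1.
Hypothesis Hc1 : alpha 1 0 = 1%N.
Hypothesis Hc2 : alpha 2 1 = 3%N.

Lemma one_Cnb u : D u 1 -> exists q, adj u q /\ C q.
Proof.
move=> Du; have Hn := D_nb Du (ltnW Hrho) (leq0n _); rewrite Hc1 in Hn.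
by case: (nb_out (t := [::]) Hn erefl) => y [A /D0 Cy _]; exists y.
Qed.

Lemma common_nb p q m : C p -> C q -> p != q -> adj p m -> adj q m -> False.
Proof.
move=> Cp Cq Npq Hp Hq.
exact: (two_C_bad' Hc1 (nbC Cp Hp) Npq (adj_sym Hp) (adj_sym Hq) Cp Cq).
Qed.

Lemma Dw2 c a b : C c -> unitv a -> unitv b -> b != - a -> D (c + a + b) 2.
Proof.
move=> Cc Ua Ub Nbma.
have Dca : D (c + a) 1 by apply: (nbC Cc); apply: adj_unit.
case: (D_exists (c + a + b)) => j Dj.
have Hadj : adj (c + a) (c + a + b) by apply: adj_unit.
have := D_adj Hadj Dca Dj.
case: j Dj => [|[|[|j]]] Dj // _.
  move/D0: Dj => Cw; exfalso.
  apply: (two_C_bad Hc1 Dca (unitN Ua) Ub ltac:(dsolve) _ Cw).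
  by rewrite addrK.
by case: (no11 Dca Hadj).
Qed.

Lemma Kpair c a b : C c -> unitv a -> unitv b -> b != a -> b != - a ->
  C (c + a + a + a + b) \/ C (c + b + b + b + a).
Proof.
move=> Cc Ua Ub Nba Nbma.
have Uma := unitN Ua; have Umb := unitN Ub.
have Naa : a != - a by apply: unit_neqN.
have Nbb : b != - b by apply: unit_neqN.
pose w : V n := c + a + b.
have Dw : D w 2 by apply: Dw2.
have Dca : D (w + - b) 1.
  by rewrite /w addrK; apply: (nbC Cc); apply: adj_unit.
have Dcb : D (w + - a) 1.
  have -> : w + - a = c + b by rewrite /w; vid.
  by apply: (nbC Cc); apply: adj_unit.
have Hn := D_nb Dw Hrho (ltnW Hrho); rewrite Hc2 in Hn.
case: (nb_out (t := [:: w + - b; w + - a]) Hn erefl) => y [Ay Dy].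
rewrite !inE negb_or => /andP [Nyb Nya].
case: (adjP Ay) => i [s Ey]; set z := e i s in Ey.
have Uz : unitv z by exists i, s.
subst y; rewrite !(inj_eq (addrI w)) in Nyb Nya.
case: (one_Cnb Dy) => c' [Ac' Cc'].
case: (adjP Ac') => i' [s' Ec']; set t := e i' s' in Ec'.
have Ut : unitv t by exists i', s'.
have Ntz : t != - z.
  apply/eqP => E; move: Cc'; rewrite Ec' E addrK => /D0 Dw0.
  by have := D_uniq Dw Dw0.
have Uma' := unitN Uz.
have Nzz : z != - z by apply: unit_neqN.
case: (eqVneq t z) => [Etz|Ntz2].
  rewrite Etz in Ec'; subst c'.
  case: (eqVneq z a) => [Eza|Nza].
    by left; move: Cc'; rewrite Eza; have -> : w + a + a = c + a + a + a + b by rewrite /w; vid.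
  case: (eqVneq z b) => [Ezb|Nzb].
    by right; move: Cc'; rewrite Ezb; have -> : w + b + b = c + b + b + b + a by rewrite /w; vid.
  exfalso.
  pose v : V n := c + a + z.
  have Dv : D v 2 by apply: Dw2 => //; dsolve.
  have Hd : [&& - z != - a, - z != b, - z != z, - a != b, - a != z & b != z] by dsolve.
  apply: (four_bad Hc2 Dv (unitN Uz) Uma Ub Uz Hd).
  - have -> : v + - z = c + a by rewrite /v addrK.
    by apply: (nbC Cc); apply: adj_unit.
  - have -> : v + - a = c + z by rewrite /v; vid.
    by apply: (nbC Cc); apply: adj_unit.
  - apply: (nbC' Cc'); have -> : w + z + z = v + b + z by rewrite /v /w; vid.
    by apply: adj_unit.
  - apply: (nbC' Cc'); have -> : w + z + z = v + z + b by rewrite /v /w; vid.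
    by apply: adj_unit.
exfalso.
have Dwt : D (w + t) 1.
  apply: (nbC' Cc'); have -> : c' = w + t + z by rewrite Ec'; vid.
  by apply: adj_unit.
case: (eqVneq t (- b)) => [Etb|Ntb].
  have Dca' : D (c + a) 1 by apply: (nbC Cc); apply: adj_unit.
  apply: (two_C_bad Hc1 Dca' Uma Uz ltac:(dsolve)); first by rewrite addrK.
  by move: Cc'; rewrite Ec' Etb; have -> : w + z + - b = c + a + z by rewrite /w; vid.
case: (eqVneq t (- a)) => [Eta|Nta].
  have Dcb' : D (c + b) 1 by apply: (nbC Cc); apply: adj_unit.
  apply: (two_C_bad Hc1 Dcb' Umb Uz ltac:(dsolve)); first by rewrite addrK.
  by move: Cc'; rewrite Ec' Eta; have -> : w + z + - a = c + b + z by rewrite /w; vid.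
exact: (four_bad Hc2 Dw Umb Uma Uz Ut ltac:(dsolve) Dca Dcb Dy Dwt).
Qed.

Lemma conflict c x y y' : C (c + x + x + x + y) -> C (c + x + x + x + y') ->
  unitv y -> unitv y' -> y != y' -> False.
Proof.
move=> C1 C2 Uy Uy' Nyy.
pose p : V n := c + x + x + x.
have Npp : p + y != p + y' by rewrite (inj_eq (addrI p)).
case: (eqVneq y' (- y)) => [E|N].
  apply: (common_nb C1 C2 Npp (m := p)).
    by move: (adj_unit (p + y) (unitN Uy)); rewrite addrK.
  rewrite E; move: (adj_unit (p + - y) Uy).
  by have -> : p + - y + y = p by vid.
apply: (common_nb C1 C2 Npp (m := p + y + y')); first by apply: adj_unit.
have -> : p + y + y' = p + y' + y by vid.
by apply: adj_unit.
Qed.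

End Part1.

End CRC.

Lemma part2_main n (C : V n -> Prop) rho alpha :
  is_CRC C rho alpha -> r_null 2 alpha -> (2 <= rho)%N ->
  alpha 1 0 = 2%N -> alpha 2 1 = 3%N -> False.
Proof.
move=> HC Hnull Hrho Hc1 Hc2.
case: (D_two_exists HC Hrho) => w Dw.
case: (D2_three HC Hrho Hc2 Dw) => x1 [x2 [x3 [U1 U2 U3 Hd [D1 D2 D3]]]].
exact: (part2_w HC Hnull Hrho Hc1 Hc2 Dw U1 U2 U3 Hd D1 D2 D3).
Qed.

Lemma no_n1 (C : V 1 -> Prop) rho alpha :
  is_CRC C rho alpha -> r_null 2 alpha -> (2 <= rho)%N ->
  alpha 2 1 = 3%N -> False.
Proof.
move=> HC Hnull Hrho Hc2.
case: (D_two_exists HC Hrho) => w Dw.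
case: (D2_three HC Hrho Hc2 Dw) => x1 [x2 [x3 [U1 U2 U3 Hd _]]].
move: Hd; case: U1 => i1 [s1 ->]; case: U2 => i2 [s2 ->]; case: U3 => i3 [s3 ->].
rewrite (ord1 i1) (ord1 i2) (ord1 i3).
by case: s1; case: s2; case: s3; rewrite ?eqxx ?andbF.
Qed.

Ltac uns := first [ assumption | apply: unitN; assumption ].

Lemma no_n3 n (C : V n -> Prop) rho alpha :
  is_CRC C rho alpha -> r_null 2 alpha -> (2 <= rho)%N ->
  alpha 1 0 = 1%N -> alpha 2 1 = 3%N -> (3 <= n)%N -> False.
Proof.
move=> HC Hnull Hrho Hc1 Hc2 Hn.
case: (C_ex HC) => c Cc.
have h0 : (0 < n)%N by lia.
have h1 : (1 < n)%N by lia.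
have h2 : (2 < n)%N by lia.
pose a := e (Ordinal h0) true.
pose b := e (Ordinal h1) true.
pose g := e (Ordinal h2) true.
have Ua : unitv a by exists (Ordinal h0), true.
have Ub : unitv b by exists (Ordinal h1), true.
have Ug : unitv g by exists (Ordinal h2), true.
have Uma := unitN Ua.
have Naa : a != - a by apply: unit_neqN.
have Nba : b != a by apply: e_neq.
have Nbma : b != - a by apply: e_neqN.
have Nga : g != a by apply: e_neq.
have Ngma : g != - a by apply: e_neqN.
have Ngb : g != b by apply: e_neq.
have Ngmb : g != - b by apply: e_neqN.
have K1 := Kpair HC Hnull Hrho Hc1 Hc2 Cc Ua Ub Nba Nbma.
have K2 := Kpair HC Hnull Hrho Hc1 Hc2 Cc Ua Ug Nga Ngma.
have K3 := Kpair HC Hnull Hrho Hc1 Hc2 Cc Ub Ug Ngb Ngmb.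
have K4 := Kpair HC Hnull Hrho Hc1 Hc2 Cc Uma Ub ltac:(dsolve) ltac:(dsolve).
have K5 := Kpair HC Hnull Hrho Hc1 Hc2 Cc Uma Ug ltac:(dsolve) ltac:(dsolve).
case: K1 => H1; case: K2 => H2; case: K3 => H3; case: K4 => H4; case: K5 => H5;
  match goal with
  | A : C (_ + ?x + ?x + ?x + ?y), B : C (_ + ?x + ?x + ?x + ?y') |- _ =>
      tryif constr_eq y y' then fail else
      exact: (conflict HC Hnull Hrho Hc1 A B ltac:(uns) ltac:(uns) ltac:(dsolve))
  end.
Qed.

Definition mk (x y : int) : V 2 := [ffun k : 'I_2 => if val k == 0%N then x else y].
Lemma mk0 x y : mk x y ord0 = x :> int. Proof. by rewrite ffunE. Qed.
Lemma mk1 x y : mk x y ord_max = y :> int. Proof. by rewrite ffunE. Qed.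

Lemma vext2 (p q : V 2) : p ord0 = q ord0 :> int -> p ord_max = q ord_max :> int -> p = q.
Proof.
move=> H0 H1; apply: vext => -[[|[|k]] Hk] //.
- by have -> : Ordinal Hk = ord0 by apply: val_inj.
- by have -> : Ordinal Hk = ord_max by apply: val_inj.
Qed.

Lemma eq2 (p q : V 2) : p = q -> p ord0 = q ord0 :> int /\ p ord_max = q ord_max :> int.
Proof. by move=> ->. Qed.

Ltac fsimp2 := rewrite ?fD ?fN ?mk0 ?mk1.
Ltac vid2 := apply: vext2; fsimp2; lia.

Lemma s2 (F : 'I_2 -> nat) : (\sum_(i < 2) F i = F ord0 + F ord_max)%N.
Proof. rewrite big_ord_recl big_ord1; congr (_ + F _)%N; by apply: val_inj. Qed.

Definition dist2 (p q : V 2) : nat :=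
  (absz (p ord0 - q ord0)%R + absz (p ord_max - q ord_max)%R)%N.

Lemma adj2 (p q : V 2) : adj p q <-> dist2 p q = 1%N.
Proof. by rewrite /adj s2 !distE. Qed.

Lemma walk_dist (x y : V 2) k : walk x y k -> (dist2 x y <= k)%N.
Proof.
elim=> [z|x0 y0 z0 k0 /adj2 H _ IH]; first by rewrite /dist2; lia.
rewrite /dist2 in H IH *; lia.
Qed.

Lemma walk_inv n (x z : V n) k : walk x z k.+1 -> exists y, adj x y /\ walk y z k.
Proof. by move=> W; inversion W as [|x0 y0 z0 k0 Hxy Wy]; subst; exists y0. Qed.

Lemma walk_inv0 n (x z : V n) : walk x z 0 -> x = z.
Proof. by move=> W; inversion W. Qed.

Lemma dist_walk k (x y : V 2) : dist2 x y = k -> walk x y k.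
Proof.
elim: k x => [|k IH] x H.
  have -> : x = y by apply: vext2; rewrite /dist2 in H; lia.
  by constructor.
pose m : V 2 := if x ord0 < y ord0 then x + mk 1 0 else if y ord0 < x ord0 then x + mk (-1) 0
  else if x ord_max < y ord_max then x + mk 0 1 else x + mk 0 (-1).
apply: (@walkS _ x m); rewrite ?adj2 /m /dist2 in H *.
  by case: ifP => ?; [|case: ifP => ?; [|case: ifP => ?]]; fsimp2; lia.
apply: IH; rewrite /m /dist2.
by case: ifP => ?; [|case: ifP => ?; [|case: ifP => ?]]; fsimp2; lia.
Qed.




Lemma adj2_mk (v : V 2) x y : (absz x + absz y)%N = 1%N -> adj v (v + mk x y).
Proof. by move=> H; apply/adj2; rewrite /dist2; fsimp2; lia. Qed.

Section N2.
Variable C : V 2 -> Prop.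
Variable rho : nat.
Variable alpha : nat -> nat -> nat.
Hypothesis HC : is_CRC C rho alpha.
Hypothesis Hnull : r_null 2 alpha.
Hypothesis Hrho : (2 <= rho)%N.
Hypothesis Hc1 : alpha 1 0 = 1%N.
Hypothesis Hc2 : alpha 2 1 = 3%N.
Local Notation D := (distC C).

Lemma Dat (v : V 2) i : (exists q, C q /\ dist2 v q = i) ->
  (forall q, C q -> (i <= dist2 v q)%N) -> D v i.
Proof.
move=> [q [Cq Hq]] Hmin; split; first by exists q; split => //; apply: dist_walk.
by move=> c j Cc W; apply: leq_trans (Hmin c Cc) (walk_dist W).
Qed.

Lemma sep4 (p q : V 2) : C p -> C q ->
  (p ord0 = q ord0 :> int /\ p ord_max = q ord_max :> int) \/ (4 <= dist2 p q)%N.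
Proof.
move=> Cp Cq.
case: (ltnP (dist2 p q) 4) => Hd; last by right.
left; have : (dist2 p q = 0 \/ dist2 p q = 1 \/ dist2 p q = 2 \/ dist2 p q = 3)%N by lia.
case=> [H0|[H1|[H2|H3]]].
- by rewrite /dist2 in H0; split; lia.
- by case: (noCC HC Hnull Cp (proj2 (adj2 p q) H1)).
- case: (eqVneq p q) => [-> //|Npq].
  have W := dist_walk H2.
  case: (walk_inv W) => m [Apm Wm]; case: (walk_inv Wm) => q' [Amq /walk_inv0 Eq]; subst q'.
  by case: (common_nb HC Hnull Hrho Hc1 Cp Cq Npq Apm (adj_sym Amq)).
- have W := dist_walk H3.
  case: (walk_inv W) => m1 [A1 W1]; case: (walk_inv W1) => m2 [A2 W2].
  case: (walk_inv W2) => q' [A3 /walk_inv0 Eq]; subst q'.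
  have D1 := nbC HC Hnull Cp A1.
  have D2 := nbC' HC Hnull Cq A3.
  by case: (no11 HC Hnull Hrho D1 A2 D2).
Qed.

Variable c : V 2.
Variable sg : int.
Hypothesis Hs : sg = 1%Z \/ sg = (-1)%Z.
Hypothesis Cc : C c.
Hypothesis Cp1 : C (c + mk 3 sg).
Hypothesis Cp2 : C (c + mk (-1) (3 * sg)).

Lemma Dloc (v : V 2) (x y : int) (i : nat) : v = c + mk x y ->
  ((absz x + absz y)%N = i \/ (absz (x - 3)%R + absz (y - sg)%R)%N = i \/
   (absz (x + 1)%R + absz (y - 3 * sg)%R)%N = i) ->
  (forall q0 q1 : int, ((q0 = 0%Z /\ q1 = 0%Z) \/ (4 <= absz q0 + absz q1)%N) ->
     ((q0 = 3%Z /\ q1 = sg) \/ (4 <= absz (q0 - 3)%R + absz (q1 - sg)%R)%N) ->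
     ((q0 = (-1)%Z /\ q1 = 3 * sg) \/ (4 <= absz (q0 + 1)%R + absz (q1 - 3 * sg)%R)%N) ->
     (i <= absz (x - q0)%R + absz (y - q1)%R)%N) ->
  D v i.
Proof.
move=> -> Hw Hl; apply: Dat.
  case: Hw => [H|[H|H]]; [exists c | exists (c + mk 3 sg) | exists (c + mk (-1) (3 * sg))];
    split => //; rewrite /dist2; fsimp2; lia.
move=> q Cq.
have S1 := sep4 Cc Cq; have S2 := sep4 Cp1 Cq; have S3 := sep4 Cp2 Cq.
move: S1 S2 S3; rewrite /dist2; fsimp2 => S1 S2 S3.
have P1 : (q ord0 - c ord0 = 0%Z /\ q ord_max - c ord_max = 0%Z) \/
  (4 <= absz (q ord0 - c ord0) + absz (q ord_max - c ord_max))%N by clear -S1; lia.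
have P2 : (q ord0 - c ord0 = 3%Z /\ q ord_max - c ord_max = sg) \/
  (4 <= absz (q ord0 - c ord0 - 3)%R + absz (q ord_max - c ord_max - sg)%R)%N by clear -S2; lia.
have P3 : (q ord0 - c ord0 = (-1)%Z /\ q ord_max - c ord_max = 3 * sg) \/
  (4 <= absz (q ord0 - c ord0 + 1)%R + absz (q ord_max - c ord_max - 3 * sg)%R)%N by clear -S3; lia.
have := Hl _ _ P1 P2 P3; clear; lia.
Qed.

Lemma nbrs2 (v y : V 2) : adj v y ->
  [\/ y = v + mk 1 0, y = v + mk (-1) 0, y = v + mk 0 sg | y = v + mk 0 (- sg)].
Proof.
move/adj2; rewrite /dist2 => H.
have [[h1 h2]|[[h1 h2]|[[h1 h2]|[h1 h2]]]] :
  (y ord0 = v ord0 + 1 /\ y ord_max = v ord_max) \/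
  (y ord0 = v ord0 - 1 /\ y ord_max = v ord_max) \/
  (y ord0 = v ord0 /\ y ord_max = v ord_max + sg) \/
  (y ord0 = v ord0 /\ y ord_max = v ord_max - sg) by lia.
- by constructor 1; vid2.
- by constructor 2; vid2.
- by constructor 3; vid2.
- by constructor 4; vid2.
Qed.


Lemma nbc4 (v : V 2) j k d1 d2 d3 d4 : nb_count C v j k ->
  D (v + mk 1 0) d1 -> D (v + mk (-1) 0) d2 -> D (v + mk 0 sg) d3 -> D (v + mk 0 (- sg)) d4 ->
  k = ((d1 == j) + (d2 == j) + (d3 == j) + (d4 == j))%N.
Proof.
move=> [s [Us [Hs' <-]]] D1 D2 D3 D4.
pose L := [:: v + mk 1 0; v + mk (-1) 0; v + mk 0 sg; v + mk 0 (- sg)].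
have UL : uniq L.
  rewrite /L /= !inE !negb_or !(inj_eq (addrI v)) -!andbA.
  by repeat (apply/andP; split); try done; apply/eqP => /eq2; fsimp2; lia.
have sub : {subset s <= L}.
  move=> y /Hs' [/nbrs2 H _]; rewrite /L !inE.
  by case: H => ->; rewrite eqxx ?orbT.
have -> : size s = count (mem s) L.
  rewrite -size_filter; apply/perm_size/uniq_perm => //; first exact: filter_uniq.
  move=> y; rewrite mem_filter; apply/idP/andP => [ys|[]//]; split => //; exact: sub.
have E (y : V 2) d : adj v y -> D y d -> (y \in s) = (d == j).
  move=> Ay Dy; apply/idP/eqP => [/Hs' [_ Dj]|Ed]; first exact: D_uniq Dy Dj.
  by apply/Hs'; split => //; rewrite -Ed.
rewrite /L /= (E _ _ _ D1) ?(E _ _ _ D2) ?(E _ _ _ D3) ?(E _ _ _ D4) ?addn0 ?addnA //;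
  apply: adj2_mk; lia.
Qed.

Lemma mkA (u : V 2) x y a b : u + mk x y + mk a b = u + mk (x + a) (y + b).
Proof. vid2. Qed.

Ltac dl := rewrite ?mkA; apply: Dloc; [reflexivity | clear -Hs; lia | move=> ? ?; clear -Hs; lia].

Lemma n2_result : rho = 3%N /\ params_0413 rho alpha.
Proof.
have Dc : D c 0 by apply/D0.
have Dh : D (c + mk 1 (2 * sg)) 3 by dl.
have Hr3 : (3 <= rho)%N := D_le_rho HC Dh.
have Dh1 : D (c + mk 1 (2 * sg) + mk 1 0) 2 by dl.
have Dh2 : D (c + mk 1 (2 * sg) + mk (-1) 0) 2 by dl.
have Dh3 : D (c + mk 1 (2 * sg) + mk 0 sg) 2 by dl.
have Dh4 : D (c + mk 1 (2 * sg) + mk 0 (- sg)) 2 by dl.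
have A32 := nbc4 (D_nb HC Dh Hr3 Hrho) Dh1 Dh2 Dh3 Dh4.
have A33 := nbc4 (D_nb HC Dh Hr3 Hr3) Dh1 Dh2 Dh3 Dh4.
have Hr : rho = 3%N.
  apply/eqP; rewrite eqn_leq Hr3 andbT; apply/negP => /negP; rewrite -ltnNge => Hr4.
  case: HC => [[_ [v Hv]] _].
  case: (D_downn Hv Hr4) => z Dz.
  case: (D_down Dz) => u [Azu Du].
  case: (D_exists HC (u + mk 1 0)) => d1 D1.
  case: (D_exists HC (u + mk (-1) 0)) => d2 D2.
  case: (D_exists HC (u + mk 0 sg)) => d3 D3.
  case: (D_exists HC (u + mk 0 (- sg))) => d4 D4.
  have := nbc4 (D_nb HC Du Hr3 Hrho) D1 D2 D3 D4.
  rewrite A32 /= => Hsum.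
  have [e1 [e2 [e3 e4]]] : [/\ d1 = 2%N, d2 = 2%N, d3 = 2%N & d4 = 2%N].
    by move: Hsum; case: eqP; case: eqP; case: eqP; case: eqP.
  case: (nbrs2 (adj_sym Azu)) => Ez; rewrite -Ez in D1 D2 D3 D4.
  - by move: (D_uniq Dz D1); rewrite e1.
  - by move: (D_uniq Dz D2); rewrite e2.
  - by move: (D_uniq Dz D3); rewrite e3.
  - by move: (D_uniq Dz D4); rewrite e4.
have Dc1 : D (c + mk 1 0) 1 by dl.
have Dc2 : D (c + mk (-1) 0) 1 by dl.
have Dc3 : D (c + mk 0 sg) 1 by dl.
have Dc4 : D (c + mk 0 (- sg)) 1 by dl.
have A01 := nbc4 (D_nb HC Dc (leq0n _) (ltnW Hrho)) Dc1 Dc2 Dc3 Dc4.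
have Du : D (c + mk 1 0) 1 by dl.
have Du1 : D (c + mk 1 0 + mk 1 0) 2 by dl.
have Du2 : D (c + mk 1 0 + mk (-1) 0) 0 by dl.
have Du3 : D (c + mk 1 0 + mk 0 sg) 2 by dl.
have Du4 : D (c + mk 1 0 + mk 0 (- sg)) 2 by dl.
have A12 := nbc4 (D_nb HC Du (ltnW Hrho) Hrho) Du1 Du2 Du3 Du4.
have Dw : D (c + mk 1 sg) 2 by dl.
have Dw1 : D (c + mk 1 sg + mk 1 0) 1 by dl.
have Dw2 : D (c + mk 1 sg + mk (-1) 0) 1 by dl.
have Dw3 : D (c + mk 1 sg + mk 0 sg) 3 by dl.
have Dw4 : D (c + mk 1 sg + mk 0 (- sg)) 1 by dl.
have A22 := nbc4 (D_nb HC Dw Hrho Hrho) Dw1 Dw2 Dw3 Dw4.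
have A23 := nbc4 (D_nb HC Dw Hrho Hr3) Dw1 Dw2 Dw3 Dw4.
split => //.
rewrite /params_0413 Hr Hc1 Hc2 A01 A12 A22 A23 A32 A33 (Hnull (i := 0)) // (Hnull (i := 1)) //.
Qed.

End N2.

Ltac vid2e := apply: vext2; rewrite ?fD ?fN ?fe ?mk0 ?mk1 /=; lia.

Lemma chir (C : V 2 -> Prop) rho alpha :
  is_CRC C rho alpha -> r_null 2 alpha -> (2 <= rho)%N ->
  alpha 1 0 = 1%N -> alpha 2 1 = 3%N -> forall c, C c ->
  exists sg : int, [/\ sg = 1%Z \/ sg = (-1)%Z, C (c + mk 3 sg) & C (c + mk (-1) (3 * sg))].
Proof.
move=> HC Hnull Hrho Hc1 Hc2 c Cc.
pose a : V 2 := e ord0 true.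
pose b : V 2 := e ord_max true.
have Ua : unitv a by exists ord0, true.
have Ub : unitv b by exists ord_max, true.
have Uma := unitN Ua; have Umb := unitN Ub.
have Naa : a != - a by apply: unit_neqN.
have Nbb : b != - b by apply: unit_neqN.
have Nba : b != a by apply: e_neq.
have Nbma : b != - a by apply: e_neqN.
have K1 := Kpair HC Hnull Hrho Hc1 Hc2 Cc Ua Ub Nba Nbma.
have K2 := Kpair HC Hnull Hrho Hc1 Hc2 Cc Ua Umb ltac:(dsolve) ltac:(dsolve).
have K3 := Kpair HC Hnull Hrho Hc1 Hc2 Cc Uma Ub ltac:(dsolve) ltac:(dsolve).
have K4 := Kpair HC Hnull Hrho Hc1 Hc2 Cc Uma Umb ltac:(dsolve) ltac:(dsolve).
case: K1 => H1; case: K2 => H2; case: K3 => H3; case: K4 => H4;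
  try (exfalso; match goal with
  | A : C (_ + ?x + ?x + ?x + ?y), B : C (_ + ?x + ?x + ?x + ?y') |- _ =>
      tryif constr_eq y y' then fail else
      exact: (conflict HC Hnull Hrho Hc1 A B ltac:(uns) ltac:(uns) ltac:(dsolve))
  end).
- exists 1%Z; split; first by left.
    by have -> : c + mk 3 1 = c + a + a + a + b by rewrite /a /b; vid2e.
  by have -> : c + mk (-1) (3 * 1) = c + b + b + b + - a by rewrite /a /b; vid2e.
- exists (-1)%Z; split; first by right.
    by have -> : c + mk 3 (-1) = c + a + a + a + - b by rewrite /a /b; vid2e.
  by have -> : c + mk (-1) (3 * -1) = c + - b + - b + - b + - a by rewrite /a /b; vid2e.
Qed.

Definition P0 (x : V 2) : Prop := ((x ord0 + 2 * x ord_max) %% 5)%Z = 0%Z.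
Definition C0 (x : V 2) : Prop := P0 x /\ ~~ odd (weight x).
Definition kk (v : V 2) : nat := absz ((v ord0 + 7 * v ord_max) %% 10)%Z.
Definition fz (r : nat) : nat := nth 0%N [:: 0; 1; 2; 1; 2; 3; 2; 1; 2; 1]%N r.

Lemma weight2 (v : V 2) : weight v = (absz (v ord0) + absz (v ord_max))%N.
Proof. by rewrite /weight s2. Qed.

Lemma C0E v : C0 v <-> kk v = 0%N.
Proof. rewrite /C0 /P0 /kk weight2; split; [case=> H1 H2|move=> H]; [|split]; lia. Qed.

Lemma kk_lt v : (kk v < 10)%N.
Proof. rewrite /kk; lia. Qed.

Lemma kkA v : kk (v + mk 1 0) = ((kk v + 1) %% 10)%N.
Proof. rewrite /kk; fsimp2; lia. Qed.
Lemma kkB v : kk (v + mk (-1) 0) = ((kk v + 9) %% 10)%N.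
Proof. rewrite /kk; fsimp2; lia. Qed.
Lemma kkC v : kk (v + mk 0 1) = ((kk v + 7) %% 10)%N.
Proof. rewrite /kk; fsimp2; lia. Qed.
Lemma kkD v : kk (v + mk 0 (-1)) = ((kk v + 3) %% 10)%N.
Proof. rewrite /kk; fsimp2; lia. Qed.

Lemma nbrs1 (v y : V 2) : adj v y ->
  [\/ y = v + mk 1 0, y = v + mk (-1) 0, y = v + mk 0 1 | y = v + mk 0 (-1)].
Proof.
move/adj2; rewrite /dist2 => H.
have [[h1 h2]|[[h1 h2]|[[h1 h2]|[h1 h2]]]] :
  (y ord0 = v ord0 + 1 /\ y ord_max = v ord_max) \/
  (y ord0 = v ord0 - 1 /\ y ord_max = v ord_max) \/
  (y ord0 = v ord0 /\ y ord_max = v ord_max + 1) \/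
  (y ord0 = v ord0 /\ y ord_max = v ord_max - 1) by lia.
- by constructor 1; vid2.
- by constructor 2; vid2.
- by constructor 3; vid2.
- by constructor 4; vid2.
Qed.

Definition dd := [:: 1; 9; 7; 3]%N.

Lemma fz_lip_check : all (fun r => all (fun d => fz r <= (fz ((r + d) %% 10)).+1)%N dd) (iota 0 10).
Proof. by []. Qed.

Lemma fz_lip (u y : V 2) : adj u y -> (fz (kk u) <= (fz (kk y)).+1)%N.
Proof.
move=> /nbrs1 H.
have Hu : kk u \in iota 0 10 by rewrite mem_iota /= add0n kk_lt.
have /allP := allP fz_lip_check _ Hu.
by case: H => ->; rewrite ?kkA ?kkB ?kkC ?kkD => /(_ _); apply; rewrite !inE eqxx ?orbT.
Qed.

Lemma walk_low (v c : V 2) j : walk v c j -> C0 c -> (fz (kk v) <= j)%N.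
Proof.
move=> W; elim: W => [x|x y z k Hxy _ IH] Cz.
  by move/C0E: Cz; rewrite /= => ->.
have := fz_lip Hxy; have := IH Cz; lia.
Qed.

Definition desc (r : nat) : nat := nth 1%N [:: 1; 9; 1; 7; 9; 9; 1; 3; 9; 1]%N r.

Lemma desc_check : all (fun r => (fz r == 0%N) || (fz ((r + desc r) %% 10)%N == (fz r).-1)) (iota 0 10).
Proof. by []. Qed.
Lemma desc_in_check : all (fun r => desc r \in dd) (iota 0 10).
Proof. by []. Qed.
Lemma fz0_check : all (fun r => (fz r == 0%N) ==> (r == 0%N)) (iota 0 10).
Proof. by []. Qed.

Lemma walk_up m (v : V 2) : fz (kk v) = m -> exists c, C0 c /\ walk v c m.
Proof.
elim: m v => [|m IH] v Hv.
  exists v; split; last by constructor.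
  apply/C0E.
  have Hu : kk v \in iota 0 10 by rewrite mem_iota /= add0n kk_lt.
  by move: (allP fz0_check _ Hu); rewrite Hv /= => /eqP.
have Hu : kk v \in iota 0 10 by rewrite mem_iota /= add0n kk_lt.
move: (allP desc_check _ Hu) (allP desc_in_check _ Hu); rewrite Hv /=.
rewrite /dd !inE => /eqP Hd Hin.
have [y [Ay Ky]] : exists y, adj v y /\ kk y = ((kk v + desc (kk v)) %% 10)%N.
  case/or4P: Hin => /eqP ->.
  - by exists (v + mk 1 0); split; [apply: adj2_mk | rewrite kkA].
  - by exists (v + mk (-1) 0); split; [apply: adj2_mk | rewrite kkB].
  - by exists (v + mk 0 1); split; [apply: adj2_mk | rewrite kkC].
  - by exists (v + mk 0 (-1)); split; [apply: adj2_mk | rewrite kkD].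
case: (IH y); first by rewrite Ky Hd.
by move=> c [Cc W]; exists c; split => //; apply: walkS W.
Qed.

Lemma D0E (v : V 2) : distC C0 v (fz (kk v)).
Proof.
split; first exact: walk_up.
by move=> c j Cc W; apply: walk_low W Cc.
Qed.

Lemma D0E' (v : V 2) i : distC C0 v i -> i = fz (kk v).
Proof. by move=> H; apply: D_uniq H (D0E v). Qed.

Definition alpha0 (i j : nat) : nat :=
  nth 0%N (nth [::] [:: [:: 0; 4; 0; 0]; [:: 1; 0; 3; 0]; [:: 0; 3; 0; 1]; [:: 0; 0; 4; 0]]%N i) j.

Lemma fz_le3_check : all (fun r => fz r <= 3)%N (iota 0 10).
Proof. by []. Qed.

Lemma cnt_check : all (fun r => all (fun j =>
   ((fz ((r + 1) %% 10) == j) + (fz ((r + 9) %% 10) == j) + (fz ((r + 7) %% 10) == j)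
    + (fz ((r + 3) %% 10) == j) == alpha0 (fz r) j)%N) (iota 0 4)) (iota 0 10).
Proof. by []. Qed.

Lemma zero_check : all (fun i => all (fun j =>
   ((j.+1 < i) || (i.+1 < j)) ==> (alpha0 i j == 0%N))%N (iota 0 4)) (iota 0 4).
Proof. by []. Qed.

Lemma inI10 v : kk v \in iota 0 10.
Proof. by rewrite mem_iota /= add0n kk_lt. Qed.

Lemma C0_CRC : is_CRC C0 3 alpha0.
Proof.
split; [split|split].
- move=> v; exists (fz (kk v)); split; last exact: D0E.
  exact: (allP fz_le3_check _ (inI10 v)).
- exists (mk 5 0); have := D0E (mk 5 0).
  by have -> : kk (mk 5 0) = 5%N by rewrite /kk; fsimp2; lia.
- move=> i j Hi Hj v /D0E' Ei.
  pose L := [:: v + mk 1 0; v + mk (-1) 0; v + mk 0 1; v + mk 0 (-1)].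
  exists [seq y <- L | fz (kk y) == j]; split; [|split].
  + apply: filter_uniq; rewrite /L /= !inE !negb_or !(inj_eq (addrI v)) -!andbA.
    by repeat (apply/andP; split); try done; apply/eqP => /eq2; fsimp2; lia.
  + move=> y; rewrite mem_filter; split.
      move=> /andP [/eqP Hy yL]; split; last by rewrite -Hy; exact: D0E.
      by move: yL; rewrite /L !inE => /or4P [] /eqP ->; apply: adj2_mk.
    move=> [Ay Dy]; rewrite (D0E' Dy) eqxx /=.
    by rewrite /L !inE; case: (nbrs1 Ay) => ->; rewrite eqxx ?orbT.
  + rewrite size_filter /L /= kkA kkB kkC kkD Ei addn0 !addnA.
    have Hj' : j \in iota 0 4 by rewrite mem_iota /= add0n ltnS.
    by move: (allP (allP cnt_check _ (inI10 v)) _ Hj') => /eqP.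
- move=> i j Hi Hj Hij.
  have Hi' : i \in iota 0 4 by rewrite mem_iota /= add0n ltnS.
  have Hj' : j \in iota 0 4 by rewrite mem_iota /= add0n ltnS.
  move: (allP (allP zero_check _ Hi') _ Hj') => /implyP H; apply/eqP; apply: H.
  by case: Hij => ->; rewrite ?orbT.
Qed.

Lemma params0 : params_0413 3 alpha0.
Proof. by []. Qed.

Lemma P0_perfect : perfect_code P0.
Proof.
move=> v.
have H : exists x, P0 x /\ (x = v \/ adj v x).
  rewrite /P0.
  have : ((v ord0 + 2 * v ord_max) %% 5 = 0)%Z \/ ((v ord0 + 2 * v ord_max) %% 5 = 1)%Z \/
            ((v ord0 + 2 * v ord_max) %% 5 = 2)%Z \/ ((v ord0 + 2 * v ord_max) %% 5 = 3)%Z \/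
            ((v ord0 + 2 * v ord_max) %% 5 = 4)%Z by lia.
  case=> [E|[E|[E|[E|E]]]].
  - by exists v; split => //; left.
  - exists (v + mk (-1) 0); split; [fsimp2; lia | right; exact: adj2_mk].
  - exists (v + mk 0 (-1)); split; [fsimp2; lia | right; exact: adj2_mk].
  - exists (v + mk 0 1); split; [fsimp2; lia | right; exact: adj2_mk].
  - exists (v + mk 1 0); split; [fsimp2; lia | right; exact: adj2_mk].
case: H => x [Px Hx]; exists x; split => // x' [Px' Hx'].
have Ex : exists d0 d1 : int, x = v + mk d0 d1 /\ (absz d0 + absz d1 <= 1)%N.
  case: Hx => [->|/nbrs1 [] ->]; [exists 0%Z, 0%Z; split => //; vid2 | | | |];
    by eexists; eexists; split; first reflexivity.
have Ex' : exists d0 d1 : int, x' = v + mk d0 d1 /\ (absz d0 + absz d1 <= 1)%N.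
  case: Hx' => [->|/nbrs1 [] ->]; [exists 0%Z, 0%Z; split => //; vid2 | | | |];
    by eexists; eexists; split; first reflexivity.
case: Ex => d0 [d1 [E1 B1]]; case: Ex' => d0' [d1' [E2 B2]].
move: Px Px'; rewrite /P0 E1 E2; fsimp2 => Px Px'.
apply: vext2; fsimp2; lia.
Qed.

Local Close Scope ring_scope.

Theorem mainTheorem5 :
  (* (1) *)
  (forall n : nat, (1 <= n)%N ->
     ((exists (C : V n -> Prop) (rho : nat) (alpha : nat -> nat -> nat),
         is_CRC C rho alpha /\ r_null 2 alpha /\ (2 <= rho)%N /\
         alpha 1 0 = 1%N /\ alpha 2 1 = 3%N)
      <-> n = 2%N)) /\
  (forall (n : nat) (C : V n -> Prop) (rho : nat) (alpha : nat -> nat -> nat),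
     (1 <= n)%N -> is_CRC C rho alpha -> r_null 2 alpha -> (2 <= rho)%N ->
     alpha 1 0 = 1%N -> alpha 2 1 = 3%N ->
     n = 2%N /\ params_0413 rho alpha) /\
  (exists P : V 2 -> Prop, perfect_code P /\
     exists alpha : nat -> nat -> nat,
       is_CRC (fun x => P x /\ ~~ odd (weight x)) 3 alpha /\
       params_0413 3 alpha) /\
  (* (2) *)
  (forall n : nat, (1 <= n)%N ->
     ~ (exists (C : V n -> Prop) (rho : nat) (alpha : nat -> nat -> nat),
          is_CRC C rho alpha /\ r_null 2 alpha /\ (2 <= rho)%N /\
          alpha 1 0 = 2%N /\ alpha 2 1 = 3%N)).
Proof.
have part1 : forall (n : nat) (C : V n -> Prop) (rho : nat) (alpha : nat -> nat -> nat),
     (1 <= n)%N -> is_CRC C rho alpha -> r_null 2 alpha -> (2 <= rho)%N ->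
     alpha 1 0 = 1%N -> alpha 2 1 = 3%N ->
     n = 2%N /\ params_0413 rho alpha.
  move=> [|[|[|n]]] C rho alpha Hn HC Hnull Hrho Hc1 Hc2 //.
  - by case: (no_n1 HC Hnull Hrho Hc2).
  - split => //; case: (C_ex HC) => c Cc.
    case: (chir HC Hnull Hrho Hc1 Hc2 Cc) => sg [Hs C1 C2].
    exact: (proj2 (n2_result HC Hnull Hrho Hc1 Hc2 Hs Cc C1 C2)).
  - by case: (no_n3 HC Hnull Hrho Hc1 Hc2 (isT : (3 <= n.+3)%N)).
split; [|split; [exact: part1|split]].
- move=> n Hn; split.
    by case=> C [rho [alpha [HC [Hnull [Hrho [Hc1 Hc2]]]]]];
       case: (part1 n C rho alpha Hn HC Hnull Hrho Hc1 Hc2).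
  move=> ->; exists C0, 3, alpha0; split; first exact: C0_CRC.
  by split; [case=> [|[|i]] | ].
- exists P0; split; first exact: P0_perfect.
  by exists alpha0; split; [exact: C0_CRC | exact: params0].
- move=> n Hn [C [rho [alpha [HC [Hnull [Hrho [Hc1 Hc2]]]]]]].
  exact: (part2_main HC Hnull Hrho Hc1 Hc2).
Qed.
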